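(* Let $\varepsilon>0$ and $\delta>0$ be constants. For each $n$, let $f(x)=\sum_{i=1}^n a_i x_i$ be a linear function on $\{0,1\}^n$ with weights $a_1\ge a_2\ge\dots\ge a_n>0$, and let $f^*:=\sum_{i=1}^n a_i$. Consider Algorithm 1 (see context) with an $f$-monotone selection mechanism, bitwise mutation with rate $\chi/n$ where $\chi=\Omega(1)$, and population size $\lambda\ge n^{2+\delta}$. Let $T$ be the smallest $t$ such that the population $P_t$ satisfies $$\sum_{j=1}^{\lambda} f(P_t(j))\le \lambda\,\frac{f^*}{2}(1-\varepsilon).$$ Then there exists a constant $c>0$ such that $\Pr[T\le e^{cn}]=e^{-\Omega(n^{\delta})}$.
   Context: Algorithm 1 (non-elitist EA): the search space is $\mathcal X=\{0,1\}^n$; the initial population $P_0\in\mathcal X^\lambda$ is sampled uniformly at random. In each generation $t=0,1,2,\dots$, the new population $P_{t+1}$ is formed by $\lambda$ independent repetitions of: sample an index $I=\mathrm{sel}(P_t)\in[\lambda]$ by the selection mechanism, and set the offspring to $\mathrm{mutate}(P_t(I))$. A population is a vector $P\in\mathcal X^\lambda$, $P(i)$ its $i$-th individual. A selection mechanism is given by probabilities $p_{\mathrm{sel}}(i\mid P)$ over $[\lambda]$; it is $f$-monotone if for all $P$ and $i,j\in[\lambda]$: $p_{\mathrm{sel}}(i\mid P)\ge p_{\mathrm{sel}}(j\mid P)\iff f(P(i))\ge f(P(j))$. Bitwise mutation with rate $\chi/n$ flips each bit independently with probability $\chi/n$, i.e. $p_{\mathrm{mut}}(y\mid x)=(\chi/n)^{H(x,y)}(1-\chi/n)^{n-H(x,y)}$,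 $H$ the Hamming distance. Asymptotic notation is with respect to $n\to\infty$. *)

(* Defs.v *)
(* classical reals. The process is a finite Markov chain on
   populations, so all probabilities are finite sums written out explicitly. *)
From Stdlib Require Import Reals List.
Import ListNotations.
Open Scope R_scope.

Definition sumL {A : Type} (g : A -> R) (l : list A) : R :=
  fold_right (fun x acc => g x + acc) 0 l.

Definition prodL {A : Type} (g : A -> R) (l : list A) : R :=
  fold_right (fun x acc => g x * acc) 1 l.

(* all bit strings of length n ({0,1}^n), bits as bool, bit i = nth i x false *)
Fixpoint all_bits (n : nat) : list (list bool) :=
  match n with
  | O => [ [] ]
  | S m => map (cons false) (all_bits m) ++ map (cons true) (all_bits m)
  end.

Fixpoint tuples {A : Type} (A_l : list A) (k : nat) : list (list A) :=
  match k with
  | O => [ [] ]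
  | S m => flat_map (fun x => map (cons x) (tuples A_l m)) A_l
  end.

Definition bitstring (n : nat) (x : list bool) : Prop := length x = n.
Definition population (n lam : nat) (P : list (list bool)) : Prop :=
  length P = lam /\ forall x, In x P -> bitstring n x.

Definition all_pops (n lam : nat) : list (list (list bool)) :=
  tuples (all_bits n) lam.

(* the i-th individual P(i) (0-based: i < lambda) *)
Definition ind (P : list (list bool)) (i : nat) : list bool := nth i P [].

Definition b2R (b : bool) : R := if b then 1 else 0.

(* linear function f(x) = sum_{i=1}^n a_i x_i; weight a_i is (a (i-1)) *)
Definition linf (n : nat) (a : nat -> R) (x : list bool) : R :=
  sumL (fun i => a i * b2R (nth i x false)) (seq 0 n).

Definition fstar (n : nat) (a : nat -> R) : R := sumL a (seq 0 n).

Definition hamming (n : nat) (x y : list bool) : nat :=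
  length (filter (fun i => negb (Bool.eqb (nth i x false) (nth i y false))) (seq 0 n)).

Definition pmut (n : nat) (chi : R) (x y : list bool) : R :=
  (chi / INR n) ^ (hamming n x y) * (1 - chi / INR n) ^ (n - hamming n x y).

(* a selection mechanism: psel P i = p_sel(i | P), for i < lambda *)
Definition selection := list (list bool) -> nat -> R.

Definition valid_selection (n lam : nat) (psel : selection) : Prop :=
  forall P, population n lam P ->
    (forall i, (i < lam)%nat -> 0 <= psel P i) /\
    sumL (psel P) (seq 0 lam) = 1.

Definition f_monotone (n lam : nat) (f : list bool -> R) (psel : selection) : Prop :=
  forall P, population n lam P ->
    forall i j, (i < lam)%nat -> (j < lam)%nat ->
      (psel P i >= psel P j <-> f (ind P i) >= f (ind P j)).

Definition offspring_prob (n lam : nat) (chi : R) (psel : selection)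
    (P : list (list bool)) (y : list bool) : R :=
  sumL (fun i => psel P i * pmut n chi (ind P i) y) (seq 0 lam).

(* transition kernel of Algorithm 1: lambda independent offspring *)
Definition trans (n lam : nat) (chi : R) (psel : selection)
    (P Q : list (list bool)) : R :=
  prodL (fun y => offspring_prob n lam chi psel P y) Q.

Definition low_pop (n lam : nat) (a : nat -> R) (eps : R)
    (P : list (list bool)) : Prop :=
  sumL (fun j => linf n a (ind P j)) (seq 0 lam)
    <= INR lam * (fstar n a / 2) * (1 - eps).

(* hit k P = Pr[ T <= k | P_0 = P ], defined by the standard recursion *)
Fixpoint hit (n lam : nat) (a : nat -> R) (eps chi : R) (psel : selection)
    (k : nat) (P : list (list bool)) : R :=
  if Rle_dec (sumL (fun j => linf n a (ind P j)) (seq 0 lam))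
             (INR lam * (fstar n a / 2) * (1 - eps))
  then 1
  else match k with
       | O => 0
       | S k' => sumL (fun Q => trans n lam chi psel P Q
                                * hit n lam a eps chi psel k' Q)
                      (all_pops n lam)
       end.

(* Pr[T <= k] with P_0 uniform over ({0,1}^n)^lambda *)
Definition prob_T_le (n lam : nat) (a : nat -> R) (eps chi : R)
    (psel : selection) (k : nat) : R :=
  sumL (fun P => / (2 ^ (n * lam)) * hit n lam a eps chi psel k P)
       (all_pops n lam).

(* Main.v *)
Require Import Defs.
From Stdlib Require Import Reals List.
From Stdlib Require Import Lra Lia.
Require Import Defs.
Import ListNotations.
Open Scope R_scope.


Lemma exp_mono x y : x <= y -> exp x <= exp y.
Proof. intros H; destruct (Rle_lt_or_eq_dec _ _ H) as [h|h]; [left; now apply exp_increasing | subst; lra]. Qed.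

Lemma sumL_app {A : Type} (g : A -> R) l1 l2 : sumL g (l1 ++ l2) = sumL g l1 + sumL g l2.
Proof. induction l1; simpl; [lra| rewrite IHl1; lra]. Qed.
Lemma sumL_ext {A : Type} (g h : A -> R) l : (forall x, In x l -> g x = h x) -> sumL g l = sumL h l.
Proof. induction l; simpl; intros H; auto. rewrite H, IHl; auto. Qed.
Lemma sumL_le {A : Type} (g h : A -> R) l : (forall x, In x l -> g x <= h x) -> sumL g l <= sumL h l.
Proof. induction l; simpl; intros H; [lra|]. specialize (IHl (fun x hx => H x (or_intror hx))). specialize (H a (or_introl eq_refl)). lra. Qed.
Lemma sumL_nonneg {A : Type} (g : A -> R) l : (forall x, In x l -> 0 <= g x) -> 0 <= sumL g l.
Proof. intros H. replace 0 with (sumL (fun _ => 0) l). apply sumL_le; auto. induction l; simpl; auto; rewrite IHl; auto; [lra|intros; apply H; simpl; auto]. Qed.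
Lemma sumL_plus {A : Type} (g h : A -> R) l : sumL (fun x => g x + h x) l = sumL g l + sumL h l.
Proof. induction l; simpl; [lra| rewrite IHl; lra]. Qed.
Lemma sumL_scal {A : Type} (c : R) (g : A -> R) l : sumL (fun x => c * g x) l = c * sumL g l.
Proof. induction l; simpl; [lra| rewrite IHl; lra]. Qed.
Lemma sumL_const {A : Type} (c : R) l : sumL (fun _ : A => c) l = INR (length l) * c.
Proof. induction l; simpl length; [simpl; lra| rewrite S_INR; simpl; rewrite IHl; lra]. Qed.
Lemma sumL_opp {A : Type} (g : A -> R) l : sumL (fun x => - g x) l = - sumL g l.
Proof. induction l; simpl; [lra| rewrite IHl; lra]. Qed.
Lemma prodL_mult {A : Type} (g h : A -> R) l : prodL (fun x => g x * h x) l = prodL g l * prodL h l.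
Proof. induction l; simpl; [lra| rewrite IHl; ring]. Qed.
Lemma prodL_nonneg {A : Type} (g : A -> R) l : (forall x, In x l -> 0 <= g x) -> 0 <= prodL g l.
Proof. induction l; simpl; intros H; [lra|]. apply Rmult_le_pos; auto. Qed.
Lemma prodL_const {A : Type} (c : R) l : prodL (fun _ : A => c) l = c ^ length l.
Proof. induction l; simpl; [lra| rewrite IHl; ring]. Qed.
Lemma exp_sumL {A : Type} (g : A -> R) l : exp (sumL g l) = prodL (fun x => exp (g x)) l.
Proof. induction l; simpl; [apply exp_0| rewrite exp_plus, IHl; ring]. Qed.

Lemma sumL_map {A B : Type} (g : B -> R) (h : A -> B) l : sumL g (map h l) = sumL (fun x => g (h x)) l.
Proof. induction l; simpl; [lra| rewrite IHl; lra]. Qed.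
Lemma sumL_flat_map {A B : Type} (g : B -> R) (h : A -> list B) l :
  sumL g (flat_map h l) = sumL (fun x => sumL g (h x)) l.
Proof. induction l; simpl; [lra| rewrite sumL_app, IHl; lra]. Qed.
Lemma sumL_swap {A B : Type} (g : A -> B -> R) l1 l2 :
  sumL (fun x => sumL (fun y => g x y) l2) l1 = sumL (fun y => sumL (fun x => g x y) l1) l2.
Proof. induction l1; simpl. induction l2; simpl; [lra| rewrite <- IHl2; lra].
  rewrite IHl1, <- sumL_plus. reflexivity. Qed.

Lemma sum_tuples {A : Type} (g : A -> R) L m :
  sumL (fun Q => prodL g Q) (tuples L m) = (sumL g L) ^ m.
Proof. induction m; simpl; [lra|]. rewrite sumL_flat_map.
  rewrite Rmult_comm, <- sumL_scal.
  apply sumL_ext; intros x _. rewrite sumL_map. simpl. rewrite sumL_scal. rewrite <- IHm. apply Rmult_comm. Qed.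

Lemma tuples_in {A : Type} (L : list A) m Q : In Q (tuples L m) ->
  length Q = m /\ forall y, In y Q -> In y L.
Proof. revert Q; induction m; simpl; intros Q H.
  - destruct H as [<-|[]]; simpl; split; auto; intros y [].
  - apply in_flat_map in H as [x [Hx HQ]]. apply in_map_iff in HQ as [Q' [<- HQ']].
    destruct (IHm _ HQ') as [h1 h2]. simpl; split; [lia|]. intros y [<-|hy]; auto. Qed.

Lemma all_bits_len n y : In y (all_bits n) -> length y = n.
Proof. revert y; induction n; simpl; intros y H.
  - destruct H as [<-|[]]; auto.
  - apply in_app_or in H as [H|H]; apply in_map_iff in H as [y' [<- H]]; simpl; f_equal; auto. Qed.

Lemma sumL_seq_S (g : nat -> R) s m : sumL g (seq (S s) m) = sumL (fun i => g (S i)) (seq s m).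
Proof. rewrite <- seq_shift, sumL_map. reflexivity. Qed.

Lemma sumL_seq_nth {A : Type} (g : A -> R) d Q :
  sumL (fun j => g (nth j Q d)) (seq 0 (length Q)) = sumL g Q.
Proof. induction Q; simpl; auto. rewrite sumL_seq_S. simpl. rewrite IHQ. reflexivity. Qed.

Lemma prodL_ext {A : Type} (g h : A -> R) l : (forall x, In x l -> g x = h x) -> prodL g l = prodL h l.
Proof. induction l; simpl; intros H; auto. rewrite H, IHl; auto. Qed.


Definition qb (r : R) (b c : bool) : R := if Bool.eqb b c then 1 - r else r.
Fixpoint qprod (r : R) (x y : list bool) : R :=
  match x, y with
  | b :: x', c :: y' => qb r b c * qprod r x' y'
  | _, _ => 1
  end.

Lemma len_filter_shift (p : nat -> bool) l :
  length (filter p (map S l)) = length (filter (fun i => p (S i)) l).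
Proof. induction l; simpl; auto. destruct (p (S a)); simpl; auto. Qed.

Lemma hamming_cons m b x c y :
  hamming (S m) (b :: x) (c :: y) = ((if Bool.eqb b c then 0 else 1) + hamming m x y)%nat.
Proof. unfold hamming. simpl seq. rewrite <- seq_shift. simpl filter.
  destruct (Bool.eqb b c); simpl; rewrite len_filter_shift; reflexivity. Qed.

Lemma hamming_le m x y : (hamming m x y <= m)%nat.
Proof. unfold hamming. rewrite <- (length_seq m 0) at 2. apply filter_length_le. Qed.

Lemma pmut_qprod_gen r m x y : length x = m -> length y = m ->
  r ^ hamming m x y * (1 - r) ^ (m - hamming m x y) = qprod r x y.
Proof. revert m y; induction x as [|b x IH]; intros m y Hx Hy.
  - simpl in Hx; subst m. unfold hamming; simpl. ring.
  - simpl in Hx. destruct y as [|c y]; simpl in Hy; [lia|]. destruct m as [|m]; [simpl in Hx; lia|].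
    simpl in Hx, Hy. injection Hx; injection Hy; intros Hy' Hx'.
    rewrite hamming_cons. simpl qprod. rewrite <- (IH m y); auto.
    pose proof (hamming_le m x y). unfold qb.
    destruct (Bool.eqb b c); simpl Nat.add.
    + replace (S m - hamming m x y)%nat with (S (m - hamming m x y)) by lia. simpl; ring.
    + replace (S m - S (hamming m x y))%nat with (m - hamming m x y)%nat by lia. simpl; ring. Qed.

Lemma pmut_qprod n chi x y : length x = n -> length y = n ->
  pmut n chi x y = qprod (chi / INR n) x y.
Proof. intros; unfold pmut; apply pmut_qprod_gen; auto. Qed.

Lemma qprod_nonneg r x y : 0 <= r <= 1 -> 0 <= qprod r x y.
Proof. revert y; induction x; intros [|c y] H; simpl; try lra.
  apply Rmult_le_pos; auto. unfold qb; destruct Bool.eqb; lra. Qed.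

Lemma linf_cons m a c y : linf (S m) a (c :: y) = a 0%nat * b2R c + linf m (fun i => a (S i)) y.
Proof. unfold linf. simpl seq. simpl sumL. rewrite sumL_seq_S. reflexivity. Qed.

Lemma fstar_cons m a : fstar (S m) a = a 0%nat + fstar m (fun i => a (S i)).
Proof. unfold fstar. simpl seq. simpl sumL. rewrite sumL_seq_S. reflexivity. Qed.

Lemma linf_nil a : linf 0 a [] = 0.
Proof. reflexivity. Qed.

Lemma qsum_lin r n : forall x a, length x = n ->
  sumL (fun y => qprod r x y * linf n a y) (all_bits n) = (1 - 2 * r) * linf n a x + r * fstar n a
  /\ sumL (fun y => qprod r x y) (all_bits n) = 1.
Proof. induction n; intros x a Hx.
  - destruct x; simpl in Hx; [|lia]. unfold linf, fstar; simpl. split; ring.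
  - destruct x as [|b x]; simpl in Hx; [lia|]. injection Hx; intro Hx'.
    destruct (IHn x (fun i => a (S i)) Hx') as [H1 H2].
    simpl all_bits. rewrite !sumL_app, !sumL_map. simpl qprod.
    rewrite linf_cons, fstar_cons.
    split.
    + transitivity (qb r b false * sumL (fun y => qprod r x y * linf n (fun i => a (S i)) y) (all_bits n)
                    + qb r b true * (a 0%nat * sumL (fun y => qprod r x y) (all_bits n)
                                     + sumL (fun y => qprod r x y * linf n (fun i => a (S i)) y) (all_bits n))).
      * set (a' := fun i => a (S i)).
        assert (E1 : sumL (fun y => qb r b false * qprod r x y * linf (S n) a (false :: y)) (all_bits n)
                 = qb r b false * sumL (fun y => qprod r x y * linf n a' y) (all_bits n)).
        { rewrite <- sumL_scal. apply sumL_ext. intros y _. rewrite linf_cons. simpl b2R. unfold a'. ring. }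
        assert (E2 : sumL (fun y => qb r b true * qprod r x y * linf (S n) a (true :: y)) (all_bits n)
                 = qb r b true * (a 0%nat * sumL (fun y => qprod r x y) (all_bits n)
                                     + sumL (fun y => qprod r x y * linf n a' y) (all_bits n))).
        { rewrite <- sumL_scal, <- sumL_plus, <- sumL_scal. apply sumL_ext. intros y _. rewrite linf_cons. simpl b2R. unfold a'. ring. }
        rewrite E1, E2. reflexivity.
      * rewrite H1, H2. unfold qb; destruct b; simpl; ring.
    + rewrite !sumL_scal. change (sumL (qprod r x) (all_bits n)) with (sumL (fun y => qprod r x y) (all_bits n)). rewrite H2; unfold qb; destruct b; simpl; ring.
Qed.


Lemma cheb (p f : nat -> R) (I : list nat) :
  (forall i j, In i I -> In j I -> 0 <= (p i - p j) * (f i - f j)) ->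
  sumL p I = 1 -> sumL f I <= INR (length I) * sumL (fun i => p i * f i) I.
Proof.
  intros H Hp.
  set (N := INR (length I)). set (Spf := sumL (fun i => p i * f i) I). set (Sf := sumL f I).
  assert (Hin : forall i, sumL (fun j => (p i - p j) * (f i - f j)) I
             = N * (p i * f i) + Spf + (- p i) * Sf + (- f i) * 1).
  { intros i. rewrite <- Hp. unfold N, Spf, Sf. rewrite <- sumL_const, <- !sumL_scal, <- !sumL_plus.
    apply sumL_ext; intros; ring. }
  assert (Hout : sumL (fun i => sumL (fun j => (p i - p j) * (f i - f j)) I) I
                 = 2 * N * Spf - 2 * Sf).
  { rewrite (sumL_ext _ (fun i => (N * (p i * f i) + Spf) + ((- Sf) * p i + (-1) * f i))).
    2: { intros i _; rewrite Hin; ring. }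
    rewrite !sumL_plus, !sumL_scal, sumL_const, Hp. fold Sf Spf N. ring. }
  assert (0 <= sumL (fun i => sumL (fun j => (p i - p j) * (f i - f j)) I) I).
  { apply sumL_nonneg; intros i Hi. apply sumL_nonneg; intros j Hj. auto. }
  lra.
Qed.

Lemma ind_len n lam P i : population n lam P -> (i < lam)%nat -> length (ind P i) = n.
Proof. intros [HL Hx] Hi. apply Hx. unfold ind. apply nth_In. lia. Qed.

Lemma in_seq0 lam i : In i (seq 0 lam) -> (i < lam)%nat.
Proof. intros H; apply in_seq in H; lia. Qed.

Lemma off_sum n lam chi psel P (g : list bool -> R) : population n lam P ->
  sumL (fun y => offspring_prob n lam chi psel P y * g y) (all_bits n)
  = sumL (fun i => psel P i * sumL (fun y => qprod (chi / INR n) (ind P i) y * g y) (all_bits n)) (seq 0 lam).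
Proof.
  intros HP. unfold offspring_prob.
  rewrite (sumL_ext _ (fun y => sumL (fun i => psel P i * (qprod (chi / INR n) (ind P i) y * g y)) (seq 0 lam))).
  - rewrite sumL_swap. apply sumL_ext; intros i _. rewrite sumL_scal. reflexivity.
  - intros y Hy. rewrite Rmult_comm, <- sumL_scal. apply sumL_ext; intros i Hi.
    rewrite pmut_qprod. ring. apply (ind_len n lam); auto using in_seq0. apply all_bits_len; auto.
Qed.

Lemma off_props n lam a chi psel P : population n lam P -> valid_selection n lam psel ->
  0 <= chi / INR n <= 1 ->
  (forall y, In y (all_bits n) -> 0 <= offspring_prob n lam chi psel P y) /\
  sumL (offspring_prob n lam chi psel P) (all_bits n) = 1 /\
  sumL (fun y => offspring_prob n lam chi psel P y * linf n a y) (all_bits n)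
  = (1 - 2 * (chi / INR n)) * sumL (fun i => psel P i * linf n a (ind P i)) (seq 0 lam)
    + (chi / INR n) * fstar n a.
Proof.
  intros HP Hv Hr. destruct (Hv P HP) as [Hp0 Hp1]. split; [|split].
  - intros y Hy. unfold offspring_prob. apply sumL_nonneg; intros i Hi.
    apply Rmult_le_pos. apply Hp0; auto using in_seq0.
    rewrite pmut_qprod. apply qprod_nonneg; auto. apply (ind_len n lam); auto using in_seq0. apply all_bits_len; auto.
  - transitivity (sumL (fun y => offspring_prob n lam chi psel P y * 1) (all_bits n)).
    { apply sumL_ext; intros; ring. }
    rewrite off_sum; auto. transitivity (sumL (psel P) (seq 0 lam)); [|exact Hp1]. apply sumL_ext; intros i Hi.
    rewrite (sumL_ext _ (fun y => qprod (chi / INR n) (ind P i) y)) by (intros; ring).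
    destruct (qsum_lin (chi / INR n) n (ind P i) a) as [_ H2]. apply (ind_len n lam); auto using in_seq0.
    rewrite H2; ring.
  - rewrite off_sum; auto.
    rewrite (sumL_ext _ (fun i => (1 - 2 * (chi / INR n)) * (psel P i * linf n a (ind P i)) + (chi / INR n * fstar n a) * psel P i)).
    + rewrite sumL_plus, !sumL_scal, Hp1. ring.
    + intros i Hi. destruct (qsum_lin (chi / INR n) n (ind P i) a) as [H1 _]. apply (ind_len n lam); auto using in_seq0.
      rewrite H1; ring.
Qed.


Lemma exp_small x : -(1/2) <= x <= 1/2 -> exp x <= 1 + x + 2 * x^2.
Proof.
  intros Hx. pose proof (exp_ineq1_le (- x)) as H1.
  assert (H2 : exp x * exp (- x) = 1) by (rewrite <- exp_plus; replace (x + - x) with 0 by ring; apply exp_0).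
  pose proof (exp_pos x).
  apply (Rmult_le_reg_r (1 - x)); [lra|].
  assert (exp x * (1 - x) <= 1) by nra.
  assert (1 <= (1 + x + 2 * x ^ 2) * (1 - x)) by nra.
  lra.
Qed.

Lemma mgf {T : Type} (L : list T) (nu f : T -> R) (F s c : R) :
  (forall y, In y L -> 0 <= nu y) -> sumL nu L = 1 ->
  (forall y, In y L -> 0 <= f y <= F) -> 0 <= s -> s * F <= 1/2 ->
  sumL (fun y => nu y * exp (s * (c - f y))) L
  <= exp (s * (c - sumL (fun y => nu y * f y) L) + 2 * s^2 * F^2).
Proof.
  intros Hnu H1 Hf Hs HsF.
  set (m := sumL (fun y => nu y * f y) L).
  assert (Hm0 : 0 <= m). { apply sumL_nonneg; intros y Hy. specialize (Hf y Hy). specialize (Hnu y Hy). nra. }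
  assert (HmF : m <= F). { transitivity (sumL (fun y => F * nu y) L).
    apply sumL_le; intros y Hy. specialize (Hf y Hy). specialize (Hnu y Hy). nra.
    rewrite sumL_scal, H1; lra. }
  rewrite exp_plus.
  assert (Hb : sumL (fun y => nu y * exp (s * (c - f y))) L
              <= exp (s * (c - m)) * sumL (fun y => nu y * (1 + s * m - s * f y + 2 * s^2 * F^2)) L).
  { rewrite <- sumL_scal. apply sumL_le; intros y Hy. specialize (Hf y Hy). specialize (Hnu y Hy).
    replace (s * (c - f y)) with (s * (c - m) + s * (m - f y)) by ring. rewrite exp_plus.
    pose proof (exp_pos (s * (c - m))).
    assert (exp (s * (m - f y)) <= 1 + s * m - s * f y + 2 * s ^ 2 * F ^ 2).
    { eapply Rle_trans. apply exp_small. split; nra.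
      assert ((m - f y)^2 <= F^2) by nra. nra. }
    assert (nu y * exp (s * (m - f y)) <= nu y * (1 + s * m - s * f y + 2 * s ^ 2 * F ^ 2)) by (apply Rmult_le_compat_l; auto).
    replace (nu y * (exp (s * (c - m)) * exp (s * (m - f y)))) with (exp (s * (c - m)) * (nu y * exp (s * (m - f y)))) by ring.
    apply Rmult_le_compat_l; lra. }
  assert (He : sumL (fun y => nu y * (1 + s * m - s * f y + 2 * s^2 * F^2)) L = 1 + 2 * s^2 * F^2).
  { rewrite (sumL_ext _ (fun y => (1 + s * m + 2 * s^2 * F^2) * nu y + (- s) * (nu y * f y))) by (intros; ring).
    rewrite sumL_plus, !sumL_scal, H1. fold m. ring. }
  rewrite He in Hb. pose proof (exp_ineq1_le (2 * s^2 * F^2)). pose proof (exp_pos (s * (c - m))).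
  eapply Rle_trans; [exact Hb|]. apply Rmult_le_compat_l; lra.
Qed.


Lemma all_pops_pop n lam Q : In Q (all_pops n lam) -> population n lam Q.
Proof. intros H. apply tuples_in in H as [h1 h2]. split; auto. intros x Hx. apply all_bits_len, h2, Hx. Qed.

Lemma hit_bound n lam a eps chi psel (W : list (list bool) -> R) (K E : R) :
  0 <= K -> 0 <= E -> (forall P, 0 <= W P) ->
  (forall P, population n lam P ->
     sumL (fun j => linf n a (ind P j)) (seq 0 lam) <= INR lam * (fstar n a / 2) * (1 - eps) ->
     1 <= W P * E) ->
  (forall P, population n lam P ->
     (forall Q, In Q (all_pops n lam) -> 0 <= trans n lam chi psel P Q) /\
     sumL (trans n lam chi psel P) (all_pops n lam) = 1 /\
     sumL (fun Q => trans n lam chi psel P Q * W Q) (all_pops n lam) <= W P + K) ->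
  forall k P, population n lam P ->
    hit n lam a eps chi psel k P <= (INR k + 1) * (W P + INR k * K) * E.
Proof.
  intros HK HE HW Hlow Hstep k. induction k; intros P HP.
  - simpl hit. destruct Rle_dec as [h|h].
    + specialize (Hlow P HP h). simpl INR. lra.
    + simpl INR. specialize (HW P). nra.
  - simpl hit. destruct Rle_dec as [h|h].
    + specialize (Hlow P HP h). rewrite S_INR. pose proof (pos_INR k). specialize (HW P).
      assert (0 <= (INR k + 1) * (W P + (INR k + 1) * K) * E) by (apply Rmult_le_pos; [apply Rmult_le_pos|]; nra).
      assert (W P * E <= (INR k + 1 + 1) * (W P + (INR k + 1) * K) * E).
      { assert (W P <= (INR k + 1 + 1) * (W P + (INR k + 1) * K)) by nra. apply Rmult_le_compat_r; auto. }
      lra.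
    + destruct (Hstep P HP) as [Ht0 [Ht1 Ht2]].
      eapply Rle_trans.
      { apply sumL_le. intros Q HQ. apply Rmult_le_compat_l. apply Ht0; auto. apply IHk. apply all_pops_pop; auto. }
      rewrite (sumL_ext _ (fun Q => ((INR k + 1) * E) * (trans n lam chi psel P Q * W Q) + ((INR k + 1) * INR k * K * E) * trans n lam chi psel P Q)) by (intros; ring).
      rewrite sumL_plus, !sumL_scal. rewrite Ht1. rewrite S_INR. pose proof (pos_INR k).
      assert (((INR k + 1) * E) * sumL (fun Q => trans n lam chi psel P Q * W Q) (all_pops n lam) <= ((INR k + 1) * E) * (W P + K)).
      { apply Rmult_le_compat_l; auto. apply Rmult_le_pos; lra. }
      specialize (HW P). assert (0 <= E * W P) by nra. assert (0 <= E * K * INR k) by (apply Rmult_le_pos; nra).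
      nra.
Qed.


Lemma exp_pow x m : exp x ^ m = exp (INR m * x).
Proof. induction m; simpl pow. simpl INR. rewrite Rmult_0_l, exp_0; auto.
  rewrite IHm, S_INR, <- exp_plus. f_equal; ring. Qed.

Lemma case_real lamR s r e F D : 0 < s -> s * F = e * r / 8 -> 0 < r <= 1/2 -> 0 < e <= 1 ->
  0 < F -> 0 <= lamR ->
  exp (s * (1 - 2 * r) * D + 2 * lamR * s^2 * F^2) <= exp (s * D) + exp (lamR * e^2 * r / 32).
Proof.
  intros Hs HsF Hr He HF Hl.
  assert (E2 : 2 * lamR * s^2 * F^2 = 2 * lamR * (e * r / 8)^2) by (rewrite <- HsF; ring).
  destruct (Rle_or_lt (lamR * e * F / 8) D) as [HD|HD].
  - assert (s * (1 - 2 * r) * D + 2 * lamR * s^2 * F^2 <= s * D).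
    { rewrite E2. assert (r * s * (D - lamR * e * F / 8) >= 0).
      { apply Rle_ge. apply Rmult_le_pos; [|lra]. nra. }
      assert (r * s * lamR * e * F / 8 = lamR * e * r * (e * r / 8) / 8) by (rewrite <- HsF; field).
      nra. }
    pose proof (exp_pos (lamR * e^2 * r / 32)). pose proof (exp_mono _ _ H). lra.
  - assert (s * (1 - 2 * r) * D + 2 * lamR * s^2 * F^2 <= lamR * e^2 * r / 32).
    { rewrite E2. assert (s * ((1 - 2 * r) * D) <= s * (lamR * e * F / 8)).
      { apply Rmult_le_compat_l; [lra|]. assert (0 <= lamR * e * F / 8) by (assert (0 <= lamR * e) by nra; nra).
        destruct (Rle_or_lt 0 D). assert (0 <= r * D) by nra. nra. assert ((1 - 2 * r) * D <= 0) by nra. nra. }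
      assert (s * (lamR * e * F / 8) = lamR * e * (e * r / 8) / 8) by (rewrite <- HsF; field).
      assert (lamR * e^2 * r^2 <= lamR * e^2 * r / 2).
      { assert (0 <= lamR * e^2) by nra. assert (r^2 <= r / 2) by nra.
        replace (lamR * e^2 * r^2) with ((lamR * e^2) * r^2) by ring.
        replace (lamR * e^2 * r / 2) with ((lamR * e^2) * (r / 2)) by field.
        apply Rmult_le_compat_l; auto. }
      nra. }
    pose proof (exp_pos (s * D)). pose proof (exp_mono _ _ H). lra.
Qed.

Lemma linf_bounds n a y : (forall i, (i < n)%nat -> 0 <= a i) -> 0 <= linf n a y <= fstar n a.
Proof. intros Ha. unfold linf, fstar. split.
  - apply sumL_nonneg; intros i Hi. apply in_seq0 in Hi. specialize (Ha i Hi). unfold b2R; destruct nth; lra.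
  - apply sumL_le; intros i Hi. apply in_seq0 in Hi. specialize (Ha i Hi). unfold b2R; destruct nth; lra.
Qed.

Lemma W_eq n lam a s P : population n lam P ->
  prodL (fun y => exp (s * (fstar n a / 2 - linf n a y))) P
  = exp (s * (INR lam * (fstar n a / 2) - sumL (fun j => linf n a (ind P j)) (seq 0 lam))).
Proof. intros [HL _]. rewrite <- exp_sumL. f_equal. unfold ind. rewrite <- HL, sumL_seq_nth.
  rewrite (sumL_ext _ (fun y => s * (fstar n a / 2) + (- s) * linf n a y)) by (intros; ring).
  rewrite sumL_plus, sumL_const, sumL_scal. ring. Qed.


Lemma step n lam a chi psel s e P :
  (forall i, (i < n)%nat -> 0 <= a i) -> valid_selection n lam psel ->
  f_monotone n lam (linf n a) psel ->
  0 < chi / INR n <= 1/2 -> 0 < e <= 1 -> 0 < fstar n a -> 0 < s ->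
  s * fstar n a = e * (chi / INR n) / 8 -> population n lam P ->
  (forall Q, In Q (all_pops n lam) -> 0 <= trans n lam chi psel P Q) /\
  sumL (trans n lam chi psel P) (all_pops n lam) = 1 /\
  sumL (fun Q => trans n lam chi psel P Q * prodL (fun y => exp (s * (fstar n a / 2 - linf n a y))) Q) (all_pops n lam)
  <= prodL (fun y => exp (s * (fstar n a / 2 - linf n a y))) P + exp (INR lam * e^2 * (chi / INR n) / 32).
Proof.
  intros Ha Hv Hm Hr He HF Hs HsF HP.
  set (r := chi / INR n) in *. set (F := fstar n a) in *.
  assert (Hr1 : 0 <= r <= 1) by lra.
  destruct (off_props n lam a chi psel P HP Hv Hr1) as [Hmu0 [Hmu1 Hmum]].
  fold r in Hmum.
  set (mu := offspring_prob n lam chi psel P) in *.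
  assert (Htr : forall Q, trans n lam chi psel P Q = prodL mu Q) by reflexivity.
  split; [|split].
  - intros Q HQ. rewrite Htr. apply prodL_nonneg. intros y Hy. apply Hmu0.
    apply tuples_in in HQ as [_ h]. auto.
  - unfold all_pops. rewrite (sumL_ext _ (fun Q => prodL mu Q)) by (intros; apply Htr).
    rewrite sum_tuples, Hmu1. apply pow1.
  - unfold all_pops.
    rewrite (sumL_ext _ (fun Q => prodL (fun y => mu y * exp (s * (F / 2 - linf n a y))) Q))
      by (intros; rewrite Htr, prodL_mult; reflexivity).
    rewrite sum_tuples.
    assert (HsF2 : s * F <= 1/2) by (rewrite HsF; nra).
    assert (Hmgf := mgf (all_bits n) mu (linf n a) F s (F / 2) Hmu0 Hmu1
                     (fun y _ => linf_bounds n a y Ha) (Rlt_le _ _ Hs) HsF2).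
    rewrite Hmum in Hmgf.
    set (Sp := sumL (fun i => psel P i * linf n a (ind P i)) (seq 0 lam)) in *.
    set (S := sumL (fun j => linf n a (ind P j)) (seq 0 lam)).
    assert (Hcheb : S <= INR lam * Sp).
    { unfold S, Sp. rewrite <- (length_seq lam 0) at 2. apply cheb.
      - intros i j Hi Hj. apply in_seq0 in Hi. apply in_seq0 in Hj.
        destruct (Rle_or_lt (psel P j) (psel P i)) as [h|h].
        + assert (linf n a (ind P i) >= linf n a (ind P j)) by (apply (Hm P HP i j Hi Hj); lra). nra.
        + assert (linf n a (ind P j) >= linf n a (ind P i)) by (apply (Hm P HP j i Hj Hi); lra). nra.
      - apply (Hv P HP). }
    unfold F; rewrite (W_eq n lam a s P HP). fold F S.
    eapply Rle_trans.
    { apply pow_incr. split. apply sumL_nonneg; intros y Hy. apply Rmult_le_pos; auto. left; apply exp_pos.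
      exact Hmgf. }
    rewrite exp_pow.
    eapply Rle_trans; [|apply (case_real (INR lam) s r e F (INR lam * (F / 2) - S)); auto; try lra; apply pos_INR].
    apply exp_mono.
    assert (0 <= s * (1 - 2 * r)) by nra.
    assert (s * (1 - 2 * r) * S <= s * (1 - 2 * r) * (INR lam * Sp)) by (apply Rmult_le_compat_l; auto).
    change (fstar n a) with F. clearbody F r S Sp mu. assert (Heq : s * (1 - 2 * r) * (INR lam * (F / 2) - S) + 2 * INR lam * s ^ 2 * F ^ 2 - INR lam * (s * (F / 2 - ((1 - 2 * r) * Sp + r * F)) + 2 * s ^ 2 * F ^ 2) = s * (1 - 2 * r) * (INR lam * Sp) - s * (1 - 2 * r) * S) by field. lra.
Qed.


Lemma qprod_half x y : length x = length y -> qprod (1/2) x y = (/2) ^ length x.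
Proof. revert y; induction x; intros [|c y] H; simpl in *; try lia; auto.
  rewrite IHx by lia. unfold qb; destruct Bool.eqb; field. Qed.

Lemma init_bound n lam a s e r :
  (forall i, (i < n)%nat -> 0 <= a i) -> 0 < fstar n a -> 0 < s -> 0 < r <= 1/2 -> 0 < e <= 1 ->
  s * fstar n a = e * r / 8 ->
  sumL (fun Q => / 2 ^ (n * lam) * prodL (fun y => exp (s * (fstar n a / 2 - linf n a y))) Q) (all_pops n lam)
    <= exp (INR lam * e^2 * r / 32)
  /\ sumL (fun Q => / 2 ^ (n * lam)) (all_pops n lam) = 1.
Proof.
  intros Ha HF Hs Hr He HsF.
  set (x0 := repeat false n).
  assert (Hx0 : length x0 = n) by apply repeat_length.
  assert (Hu : forall Q, In Q (all_pops n lam) -> / 2 ^ (n * lam) = prodL (fun y => qprod (1/2) x0 y) Q).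
  { intros Q HQ. apply tuples_in in HQ as [HL Hy].
    rewrite (prodL_ext _ (fun _ => (/2)^n)).
    - rewrite prodL_const, HL, <- pow_mult, pow_inv. reflexivity.
    - intros y Hy'. rewrite qprod_half, Hx0; auto. rewrite Hx0, (all_bits_len n y); auto. }
  destruct (qsum_lin (1/2) n x0 a Hx0) as [Hm H1].
  assert (Hnu0 : forall y, In y (all_bits n) -> 0 <= qprod (1/2) x0 y) by (intros; apply qprod_nonneg; lra).
  split.
  - rewrite (sumL_ext _ (fun Q => prodL (fun y => qprod (1/2) x0 y * exp (s * (fstar n a / 2 - linf n a y))) Q)).
    2: { intros Q HQ. rewrite (Hu Q HQ), prodL_mult; auto. }
    unfold all_pops. rewrite sum_tuples.
    assert (HsF2 : s * fstar n a <= 1/2) by (rewrite HsF; nra).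
    assert (Hmgf := mgf (all_bits n) (fun y => qprod (1/2) x0 y) (linf n a) (fstar n a) s (fstar n a / 2) Hnu0 H1
                     (fun y _ => linf_bounds n a y Ha) (Rlt_le _ _ Hs) HsF2).
    cbv beta in Hmgf. rewrite Hm in Hmgf.
    eapply Rle_trans.
    { apply pow_incr. split. apply sumL_nonneg; intros y Hy. apply Rmult_le_pos; auto. left; apply exp_pos.
      exact Hmgf. }
    rewrite exp_pow. apply exp_mono.
    assert (Hsq : s ^ 2 * fstar n a ^ 2 = (e * r / 8) ^ 2) by (rewrite <- HsF; ring).
    assert (0 <= INR lam) by apply pos_INR.
    assert (Hr2 : r ^ 2 <= r) by nra.
    assert (0 <= INR lam * e^2) by nra.
    assert (INR lam * e ^ 2 * r ^ 2 <= INR lam * e ^ 2 * r) by (apply Rmult_le_compat_l; auto).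
    assert (Hl : INR lam * (s * (fstar n a / 2 - ((1 - 2 * (1 / 2)) * linf n a x0 + 1 / 2 * fstar n a)) + 2 * s ^ 2 * fstar n a ^ 2) = INR lam * (2 * (s ^ 2 * fstar n a ^ 2))) by field.
    rewrite Hl, Hsq. lra.
  - rewrite (sumL_ext _ (fun Q => prodL (fun y => qprod (1/2) x0 y) Q)) by (intros; apply Hu; auto).
    unfold all_pops. rewrite sum_tuples, H1. apply pow1.
Qed.


Theorem lemma1 (eps delta chi0 : R) (Heps : 0 < eps) (Hdelta : 0 < delta)
  (Hchi0 : 0 < chi0) :
  exists c : R, 0 < c /\
  exists d : R, 0 < d /\
  exists N : nat,
  forall (n : nat), (N <= n)%nat ->
  forall (a : nat -> R),
    (forall i, (i < n)%nat -> 0 < a i) ->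
    (forall i j, (i <= j)%nat -> (j < n)%nat -> a j <= a i) ->
  forall (chi : R), chi0 <= chi -> chi <= INR n / 2 ->
  forall (lam : nat), Rpower (INR n) (2 + delta) <= INR lam ->
  forall (psel : selection),
    valid_selection n lam psel ->
    f_monotone n lam (linf n a) psel ->
  forall (k : nat), INR k <= exp (c * INR n) ->
    prob_T_le n lam a eps chi psel k <= exp (- d * Rpower (INR n) delta).
Proof.
  set (e := Rmin eps 1).
  assert (He : 0 < e <= 1) by (unfold e; split; [apply Rmin_glb_lt; lra | apply Rmin_r]).
  assert (Hee : e <= eps) by apply Rmin_l.
  set (C := e^2 * chi0 / 32).
  assert (HC : 0 < C) by (unfold C; assert (0 < e^2) by nra; apply Rmult_lt_0_compat; [nra|lra]).
  destruct (INR_unbounded (8 / C)) as [N0 HN0].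
  exists (C / 8). split; [lra|]. exists (C / 2). split; [lra|]. exists (Nat.max 1 N0).
  intros n Hn a Ha Hmono chi Hchi1 Hchi2 lam Hlam psel Hv Hm k Hk.
  assert (HnR : 1 <= INR n) by (apply (le_INR 1); lia).
  assert (HnN : INR N0 <= INR n) by (apply le_INR; lia).
  assert (Ha0 : forall i, (i < n)%nat -> 0 <= a i) by (intros; left; auto).
  set (F := fstar n a).
  assert (HF : 0 < F).
  { unfold F. destruct n as [|m]; [simpl in HnR; lra|]. rewrite fstar_cons.
    assert (0 < a 0%nat) by (apply Ha; lia).
    assert (0 <= fstar m (fun i => a (S i))).
    { unfold fstar. apply sumL_nonneg; intros i Hi. apply in_seq0 in Hi. apply Ha0. lia. }
    lra. }
  set (r := chi / INR n).
  assert (Hrn : r * INR n = chi) by (unfold r; field; lra).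
  assert (Hr : 0 < r <= 1/2) by (split; nra).
  set (s := e * r / (8 * F)).
  assert (Hs : 0 < s) by (unfold s; apply Rdiv_lt_0_compat; nra).
  assert (HsF : s * F = e * r / 8) by (unfold s; field; lra).
  set (u := Rpower (INR n) delta).
  assert (Hu1 : 1 <= u).
  { unfold u, Rpower. rewrite <- exp_0. apply exp_mono.
    assert (0 <= ln (INR n)).
    { destruct (Rle_or_lt 0 (ln (INR n))) as [h|h]; auto.
      apply exp_increasing in h. rewrite exp_ln, exp_0 in h; lra. }
    nra. }
  assert (Hlam2 : INR n ^ 2 * u <= INR lam).
  { replace (2 + delta) with (INR 2 + delta) in Hlam by (simpl; lra).
    rewrite Rpower_plus, Rpower_pow in Hlam by lra. exact Hlam. }
  assert (Hlr : chi0 * INR n * u <= INR lam * r).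
  { apply (Rmult_le_reg_r (INR n)); [lra|].
    replace (INR lam * r * INR n) with (INR lam * chi) by (rewrite <- Hrn; ring).
    assert (0 <= INR n * u) by nra.
    assert (chi0 * INR n * u * INR n = (INR n ^ 2 * u) * chi0) by ring.
    assert ((INR n ^ 2 * u) * chi0 <= INR lam * chi0) by (apply Rmult_le_compat_r; lra).
    assert (INR lam * chi0 <= INR lam * chi) by (apply Rmult_le_compat_l; [apply pos_INR|lra]).
    lra. }
  set (W := fun Q : list (list bool) => prodL (fun y => exp (s * (F / 2 - linf n a y))) Q).
  set (K := exp (INR lam * e^2 * r / 32)).
  set (E0 := exp (- (INR lam * e^2 * r / 16))).
  assert (Hhit := hit_bound n lam a eps chi psel W K E0
    (Rlt_le _ _ (exp_pos _)) (Rlt_le _ _ (exp_pos _))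
    (fun P => prodL_nonneg _ P (fun y _ => Rlt_le _ _ (exp_pos _)))).
  assert (Hlow : forall P, population n lam P ->
     sumL (fun j => linf n a (ind P j)) (seq 0 lam) <= INR lam * (fstar n a / 2) * (1 - eps) ->
     1 <= W P * E0).
  { intros P HP Hl. unfold W, E0. unfold F. rewrite (W_eq n lam a s P HP). fold F. rewrite <- exp_plus.
    rewrite <- exp_0. apply exp_mono.
    set (S := sumL (fun j => linf n a (ind P j)) (seq 0 lam)) in *. change (fstar n a) with F in Hl.
    assert (INR lam * F * e / 2 <= INR lam * (F / 2) - S).
    { assert (0 <= INR lam * F) by (apply Rmult_le_pos; [apply pos_INR|lra]).
      assert (INR lam * F * e <= INR lam * F * eps) by (apply Rmult_le_compat_l; auto). nra. }
    assert (s * (INR lam * F * e / 2) <= s * (INR lam * (F / 2) - S)) by (apply Rmult_le_compat_l; lra).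
    assert (s * (INR lam * F * e / 2) = INR lam * e ^ 2 * r / 16) by (replace (s * (INR lam * F * e / 2)) with (INR lam * e * (s * F) / 2) by field; rewrite HsF; field).
    lra. }
  specialize (Hhit Hlow).
  assert (Hstep : forall P, population n lam P ->
     (forall Q, In Q (all_pops n lam) -> 0 <= trans n lam chi psel P Q) /\
     sumL (trans n lam chi psel P) (all_pops n lam) = 1 /\
     sumL (fun Q => trans n lam chi psel P Q * W Q) (all_pops n lam) <= W P + K).
  { intros P HP. apply (step n lam a chi psel s e P); auto. }
  specialize (Hhit Hstep k).
  destruct (init_bound n lam a s e r Ha0 HF Hs Hr He HsF) as [HI1 HI2].
  fold F in HI1.
  assert (Hprob : prob_T_le n lam a eps chi psel k <= (INR k + 1) ^ 2 * K * E0).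
  { unfold prob_T_le. eapply Rle_trans.
    { apply sumL_le. intros P HP. apply Rmult_le_compat_l.
      left; apply Rinv_0_lt_compat, pow_lt; lra. apply Hhit. apply all_pops_pop; auto. }
    rewrite (sumL_ext _ (fun P => ((INR k + 1) * E0) * (/ 2 ^ (n * lam) * W P) + ((INR k + 1) * INR k * K * E0) * / 2 ^ (n * lam))) by (intros; ring).
    rewrite sumL_plus, (sumL_scal ((INR k + 1) * E0)), (sumL_scal ((INR k + 1) * INR k * K * E0)), HI2.
    assert (sumL (fun P => / 2 ^ (n * lam) * W P) (all_pops n lam) <= K) by exact HI1.
    assert (0 <= (INR k + 1) * E0) by (apply Rmult_le_pos; [pose proof (pos_INR k); lra| left; apply exp_pos]).
    assert (((INR k + 1) * E0) * sumL (fun P => / 2 ^ (n * lam) * W P) (all_pops n lam) <= ((INR k + 1) * E0) * K)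
      by (apply Rmult_le_compat_l; auto).
    assert (((INR k + 1) * E0) * K + (INR k + 1) * INR k * K * E0 * 1 = (INR k + 1) ^ 2 * K * E0) by ring. lra. }
  eapply Rle_trans; [exact Hprob|].
  assert (HKE : K * E0 <= exp (- (C * INR n * u))).
  { unfold K, E0. rewrite <- exp_plus. apply exp_mono.
    assert (C * INR n * u * 32 = e^2 * (chi0 * INR n * u)) by (unfold C; field).
    assert (e^2 * (chi0 * INR n * u) <= e^2 * (INR lam * r)) by (apply Rmult_le_compat_l; nra).
    nra. }
  assert (Hecn : 1 <= exp (C / 8 * INR n)) by (rewrite <- exp_0; apply exp_mono; nra).
  assert (Hk1 : (INR k + 1) ^ 2 <= exp 2 * exp (2 * (C / 8 * INR n))).
  { assert (0 <= INR k) by apply pos_INR.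
    assert (INR k + 1 <= 2 * exp (C / 8 * INR n)) by lra.
    assert (Hsq : (INR k + 1) ^ 2 <= (2 * exp (C / 8 * INR n)) ^ 2) by (apply pow_incr; lra).
    assert (He1 : 2 <= exp 1) by (pose proof (exp_ineq1_le 1); lra).
    assert (exp 2 = exp 1 * exp 1) by (rewrite <- exp_plus; f_equal; lra).
    assert (exp (2 * (C / 8 * INR n)) = exp (C / 8 * INR n) * exp (C / 8 * INR n)) by (rewrite <- exp_plus; f_equal; lra).
    assert (4 <= exp 2) by nra.
    assert (0 <= exp (C / 8 * INR n) * exp (C / 8 * INR n)) by nra.
    nra. }
  assert (Hfin : exp 2 * exp (2 * (C / 8 * INR n)) * exp (- (C * INR n * u)) <= exp (- (C / 2) * u)).
  { rewrite <- !exp_plus. apply exp_mono.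
    assert (HCn : 8 < C * INR n).
    { assert (8 / C * C = 8) by (field; lra). nra. }
    assert (C * INR n <= C * INR n * u) by nra.
    assert (C * u <= C * INR n * u) by nra.
    nra. }
  assert (0 <= K * E0) by (apply Rmult_le_pos; left; apply exp_pos).
  assert ((INR k + 1) ^ 2 * K * E0 = (INR k + 1) ^ 2 * (K * E0)) by ring.
  assert ((INR k + 1) ^ 2 * (K * E0) <= exp 2 * exp (2 * (C / 8 * INR n)) * (K * E0)) by (apply Rmult_le_compat_r; auto).
  assert (exp 2 * exp (2 * (C / 8 * INR n)) * (K * E0) <= exp 2 * exp (2 * (C / 8 * INR n)) * exp (- (C * INR n * u))).
  { apply Rmult_le_compat_l; auto. apply Rmult_le_pos; left; apply exp_pos. }
  fold u. lra.
Qed.
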